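(* There are opinion poll instances on $2(n+1)$ agents on which the AVD mechanism, for every choice of default node, has expected additive approximation $\Omega(\sqrt{n\ln n})$.
   Context: A nomination profile on a finite agent set $N$ is a directed graph $\mathbf{x}$ on $N$ without self-loops. For $S\subseteq N$, $d_j(S,\mathbf{x})=|\{i\in S:(i,j)\text{ is an edge}\}|$; $d_j(\mathbf{x})=d_j(N\setminus\{j\},\mathbf{x})$ and $\Delta(\mathbf{x})=\max_j d_j(\mathbf{x})$. Opinion poll model: the random profile is drawn from a product distribution $\prod_{i\in N}\mathbf{P}_i$, where $\mathbf{P}_i$ is an arbitrary distribution over sets of outgoing edges of $i$ (to nodes other than $i$), independent across agents $i$. AVD with default node $t$: a non-default node $k$ beats a non-default node $j$ if $d_k(N\setminus\{j,k,t\},\mathbf{x})>d_j(N\setminus\{j,k,t\},\mathbf{x})$; a non-default $k$ beats $t$ if $d_k(N\setminus\{k,t\},\mathbf{x})>d_t(N\setminus\{k,t\},\mathbf{x})$, and $t$ beats $k$ if $d_k(N\setminus\{k,t\},\mathbf{x})<d_t(N\setminus\{k,t\},\mathbf{x})$. AVD returns the node that beats every other node if it exists, otherwise $t$. The expected additive approximation is $\mathbb{E}[\Delta(\mathbf{x})-d_w(\mathbf{x})]$ where $w$ is the winner. *)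

(* Defs.v *)
From HB Require Import structures.
From mathcomp Require Import all_boot all_order all_algebra.
From mathcomp Require Import all_classical all_reals all_analysis.
Set Implicit Arguments. Unset Strict Implicit. Unset Printing Implicit Defensive.
Import Order.TTheory GRing.Theory Num.Theory.

Section Nomination.
Variable N : finType.

(* A nomination profile: x i is the set of out-neighbours of agent i.
   (Self-loops are excluded by the distributions below: they give
   probability 0 to any x i containing i.) *)
Definition profile := {ffun N -> {set N}}.

Definition indeg_in (S : {set N}) (x : profile) (j : N) : nat :=
  #|[set i in S | j \in x i]|.

Definition indeg (x : profile) (j : N) : nat := indeg_in [set~ j] x j.

Definition maxdeg (x : profile) : nat := \max_(j : N) indeg x j.

Definition avd_beats (t : N) (x : profile) (k j : N) : bool :=
  if k == t then
    indeg_in (~: [set j; t]) x j < indeg_in (~: [set j; t]) x t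
  else if j == t then
    indeg_in (~: [set k; t]) x k > indeg_in (~: [set k; t]) x t
  else
    indeg_in (~: [set j; k; t]) x k > indeg_in (~: [set j; k; t]) x j.

Definition avd_winner (t : N) (x : profile) : N :=
  if [pick w | [forall j, (j != w) ==> avd_beats t x w j]] is Some w
  then w else t.

Definition opinion_poll {R : numDomainType} (P : N -> {ffun {set N} -> R}) : Prop :=
  forall i, (forall S : {set N}, 0 <= P i S)%R /\ (\sum_(S : {set N}) P i S = 1)%R
            /\ (forall S : {set N}, i \in S -> P i S = 0)%R.

Definition prof_prob {R : numDomainType} (P : N -> {ffun {set N} -> R}) (x : profile) : R :=
  (\prod_(i : N) P i (x i))%R.

Definition avd_expected_additive {R : numDomainType}
    (P : N -> {ffun {set N} -> R}) (t : N) : R :=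
  (\sum_(x : profile) prof_prob P x * (maxdeg x - indeg x (avd_winner t x))%:R)%R.

End Nomination.

(* Main.v *)
Require Import Defs.
From HB Require Import structures.
From mathcomp Require Import all_boot all_order all_algebra.
From mathcomp Require Import all_classical all_reals all_analysis.
From mathcomp Require Import zify ring lra.
Import Order.TTheory GRing.Theory Num.Theory.
Set Implicit Arguments. Unset Strict Implicit. Unset Printing Implicit Defensive.

Section Flip.
Variable R : realType.
Variable I : finType.
Local Open Scope ring_scope.

Definition sg (b : bool) : R := if b then 1 else -1.
Definition flip (a : I) (w : {ffun I -> bool}) : {ffun I -> bool} :=
  [ffun i => if i == a then ~~ w i else w i].

Lemma flipK a : involutive (flip a).
Proof. by move=> w; apply/ffunP => i; rewrite !ffunE; case: eqP => // _; rewrite negbK. Qed.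

Lemma sum_odd a (h : {ffun I -> bool} -> R) :
  (forall w, h (flip a w) = - h w) -> \sum_w h w = 0.
Proof.
move=> Hh; have E : \sum_w h w = \sum_w h (flip a w).
  exact: (reindex_inj (inv_inj (flipK a))).
have E2 : \sum_w h (flip a w) = - \sum_w h w.
  by rewrite -sumrN; apply: eq_bigr => w _; rewrite Hh.
lra.
Qed.

Definition ss (a : I) (w : {ffun I -> bool}) : R := sg (w a).

Lemma ss_flip a w : ss a (flip a w) = - ss a w.
Proof. by rewrite /ss ffunE eqxx; case: (w a) => /=; rewrite ?opprK. Qed.

Lemma ss_flipo a b w : b != a -> ss b (flip a w) = ss b w.
Proof. by rewrite /ss ffunE => /negbTE ->. Qed.

Lemma ss_sq a w : ss a w ^+ 2 = 1.
Proof. by rewrite /ss /sg; case: (w a); rewrite ?sqrrN expr1n. Qed.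

Lemma sum_ss a : \sum_w ss a w = 0.
Proof. by apply: (@sum_odd a (ss a)) => w; rewrite ss_flip. Qed.

Definition SS (r : seq I) (w : {ffun I -> bool}) : R := \sum_(i <- r) ss i w.

Lemma SS_flip a r w : a \notin r -> SS r (flip a w) = SS r w.
Proof.
move=> Ha; rewrite /SS; apply: eq_big_seq => i Hi; apply: ss_flipo.
by apply: contraNneq Ha => <-.
Qed.

Lemma sum_ssSS a r k : a \notin r -> \sum_w ss a w * SS r w ^+ k = 0.
Proof.
by move=> Ha; apply: (@sum_odd a (fun w => ss a w * SS r w ^+ k)) => w; rewrite ss_flip SS_flip // mulNr.
Qed.

Lemma mom2 r : uniq r -> \sum_w SS r w ^+ 2 = (size r)%:R * 2 ^+ #|I|.
Proof.
elim: r => [_|a r IH /= /andP [Ha Hu]].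
  by rewrite /SS; under eq_bigr => w _ do rewrite big_nil expr0n /=; rewrite big1 // mul0r.
have E w : SS (a :: r) w ^+ 2 = 1 + 2 * (ss a w * SS r w ^+ 1) + SS r w ^+ 2.
  by rewrite /SS big_cons -/(SS r w) sqrrD ss_sq expr1; ring.
under eq_bigr => w _ do rewrite E.
rewrite !big_split /= -big_distrr /= sum_ssSS // IH // sumr_const card_ffun card_bool.
by rewrite -mulr_natr mulr0 addr0 mul1r natrX -[(size r).+1]addn1 natrD; ring.
Qed.

Lemma mom4 r : uniq r -> \sum_w SS r w ^+ 4 <= 3 * (size r)%:R ^+ 2 * 2 ^+ #|I|.
Proof.
elim: r => [_|a r IH /= /andP [Ha Hu]].
  by rewrite /SS; under eq_bigr => w _ do rewrite big_nil expr0n /=; rewrite big1 // mulr0 mul0r.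
have E w : SS (a :: r) w ^+ 4 =
   1 + 4 * (ss a w * SS r w ^+ 1) + 6 * SS r w ^+ 2 + 4 * (ss a w * SS r w ^+ 3) + SS r w ^+ 4.
  rewrite /SS big_cons -/(SS r w).
  have H2 := ss_sq a w.
  have -> : (ss a w + SS r w) ^+ 4 = (ss a w ^+ 2) ^+ 2 + 4 * (ss a w ^+ 2) * (ss a w * SS r w)
     + 6 * ss a w ^+ 2 * SS r w ^+ 2 + 4 * (ss a w * SS r w ^+ 3) + SS r w ^+ 4 by ring.
  by rewrite H2; ring.
under eq_bigr => w _ do rewrite E.
rewrite !big_split /= -!big_distrr /= !sum_ssSS // mom2 // sumr_const card_ffun card_bool.
rewrite !mulr0 !addr0 -mulr_natr mul1r natrX.
rewrite -[(size r).+1]addn1 natrD.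
set k : R := (size r)%:R; set T : R := 2 ^+ #|I|.
have T0 : 0 <= T by rewrite /T exprn_ge0.
have k0 : 0 <= k by rewrite /k ler0n.
have : 3 * k ^+ 2 * T + T + 6 * (k * T) <= 3 * (k + 1) ^+ 2 * T.
  have -> : 3 * (k + 1) ^+ 2 * T = 3 * k ^+ 2 * T + 6 * (k * T) + 3 * T by ring.
  lra.
have := IH Hu; rewrite -/k -/T.
lra.
Qed.

Lemma pt_bound (S M : R) : 0 < M -> S ^+ 2 <= M * `|S| + S ^+ 4 / M ^+ 2.
Proof.
move=> M0; set a := `|S|.
have a0 : 0 <= a by rewrite /a normr_ge0.
have E2 : S ^+ 2 = a ^+ 2 by rewrite /a real_normK ?num_real.
have E4 : S ^+ 4 = (a ^+ 2) ^+ 2 by rewrite -E2 -exprM.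
rewrite E2 E4.
have M20 : 0 < M ^+ 2 by rewrite exprn_gt0.
have Hd : 0 <= (a ^+ 2) ^+ 2 / M ^+ 2 by rewrite divr_ge0 // ?exprn_ge0 // ltW.
case: (lerP a M) => HaM.
  have : a ^+ 2 <= M * a by rewrite expr2 ler_wpM2r.
  lra.
have : a ^+ 2 <= (a ^+ 2) ^+ 2 / M ^+ 2.
  rewrite ler_pdivlMr // [X in _ <= X]expr2 ler_wpM2l ?exprn_ge0 //.
  by rewrite ler_pXn2r ?nnegrE // ?ltW.
have : 0 <= M * a by rewrite mulr_ge0 // ltW.
lra.
Qed.

Lemma mom1 r : uniq r -> Num.sqrt (size r)%:R / 8 * 2 ^+ #|I| <= \sum_w `|SS r w|.
Proof.
move=> Hu; set k : R := (size r)%:R; set T : R := 2 ^+ #|I|.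
set X := \sum_w `|SS r w|.
have X0 : 0 <= X by rewrite /X sumr_ge0 // => w _; rewrite normr_ge0.
have T0 : 0 < T by rewrite /T exprn_gt0.
set q := Num.sqrt k.
have q0 : 0 <= q by rewrite /q sqrtr_ge0.
have kq : k = q ^+ 2 by rewrite /q sqr_sqrtr // /k ler0n.
have [->|qp] := eqVneq q 0; first by rewrite !mul0r.
have qpos : 0 < q by rewrite lt_def qp q0.
have M0 : 0 < 2 * q by rewrite mulr_gt0.
have H1 : \sum_w SS r w ^+ 2 <= 2 * q * X + (\sum_w SS r w ^+ 4) / (2 * q) ^+ 2.
  rewrite /X mulr_sumr mulr_suml -big_split /=; apply: ler_sum => w _; exact: pt_bound.
rewrite mom2 // -/k -/T in H1.
have H4 := mom4 Hu; rewrite -/k -/T in H4.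
have M2 : 0 < (2 * q) ^+ 2 by rewrite exprn_gt0.
have H5 : (\sum_w SS r w ^+ 4) / (2 * q) ^+ 2 <= 3 * k ^+ 2 * T / (2 * q) ^+ 2.
  by rewrite ler_pM2r // invr_gt0.
have E : 3 * k ^+ 2 * T / (2 * q) ^+ 2 = 3 / 4 * q ^+ 2 * T.
  by rewrite kq; field.
rewrite E in H5.
have H : q ^+ 2 * T <= 8 * q * X by rewrite kq in H1; lra.
have H' : q * (q * T) <= q * (8 * X).
  have -> : q * (q * T) = q ^+ 2 * T by ring.
  have -> : q * (8 * X) = 8 * q * X by ring.
  exact: H.
rewrite ler_pM2l // in H'.
have -> : q / 8 * T = (q * T) / 8 by ring.
lra.
Qed.

End Flip.

Definition bitp (l : nat) (q : nat) : bool := odd (q %/ 2 ^ l).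

Lemma pattern_ex (f : nat -> bool) m :
  exists q, (q < 2 ^ m)%N /\ forall l, (l < m)%N -> bitp l q = f l.
Proof.
elim: m => [|m [q [Hq Hb]]]; first by exists 0%N.
exists (q + 2 ^ m * f m)%N; split.
  by rewrite expnS; case: (f m) => /=; lia.
move=> l; rewrite ltnS leq_eqVlt => /orP [/eqP ->|Hl].
  rewrite /bitp mulnC divnDMl ?expn_gt0 // divn_small //.
  by case: (f m).
rewrite /bitp.
have -> : (2 ^ m * f m = (2 ^ (m - l) * f m) * 2 ^ l)%N by rewrite mulnAC -expnD subnK // ltnW.
rewrite divnDMl ?expn_gt0 // oddD oddM oddX /=.
have -> : (m - l == 0)%N = false by apply/eqP; lia.
by rewrite /= addbF; exact: Hb.
Qed.

Section Con.
Variable R : realType.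
Variable n : nat.
Local Notation N := 'I_(2 * n.+1).
Local Open Scope ring_scope.

Definition L' := (trunc_log 2 n.+1).-1.
Definition L := L'.+1.
Definition pr (i : N) : nat := (i %/ 2)%N.
Definition lv (i : N) : 'I_L := inord (i %% L).
Definition Fs (i : N) (b : bool) : {set N} :=
  [set a : N | (pr a != pr i) && (bitp (lv i) (pr a) == b)].
Definition Pd (i : N) : {ffun {set N} -> R} :=
  [ffun S => (\sum_(b : bool) ((Fs i b == S) : nat)%:R) / 2].
Definition Fx (w : {ffun N -> bool}) : profile N := [ffun i => Fs i (w i)].

Lemma prod_ind (I : finType) (c : I -> bool) :
  \prod_(i : I) ((c i : nat)%:R : R) = ([forall i, c i] : nat)%:R.
Proof.
case: (boolP [forall i, c i]) => [/fintype.forallP H|/fintype.forallP H].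
  by rewrite big1 // => i _; rewrite H.
have [i /negbTE Hi] : exists i, ~~ c i by apply/existsP; rewrite -negb_forall; apply/fintype.forallP.
by rewrite (bigD1 i) //= Hi mul0r.
Qed.

Lemma expect_push (h : profile N -> R) :
  \sum_(x : profile N) prof_prob Pd x * h x
  = (\sum_(w : {ffun N -> bool}) h (Fx w)) / 2 ^+ #|N|.
Proof.
have E x : prof_prob Pd x = (\sum_(w : {ffun N -> bool}) ((Fx w == x) : nat)%:R) / 2 ^+ #|N|.
  rewrite /prof_prob.
  under eq_bigr => i _ do rewrite ffunE.
  rewrite big_split /= prodr_const -exprVn bigA_distr_bigA /=; congr (_ * _).
  apply: eq_bigr => w _; rewrite prod_ind; congr ((nat_of_bool _)%:R).
  apply/fintype.forallP/eqP => [H|<- i]; last by rewrite ffunE.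
  by apply/ffunP => i; rewrite ffunE; apply/eqP.
under eq_bigr => x _ do rewrite E mulrAC big_distrl /=.
rewrite -big_distrl /= exchange_big /=; congr (_ * _).
apply: eq_bigr => w _; rewrite (bigD1 (Fx w)) //= eqxx mul1r big1 ?addr0 //.
by move=> x /negbTE; rewrite eq_sym => ->; rewrite mul0r.
Qed.


Definition twn (j : nat) : nat := if (j %% 2 == 1)%N then (j - 1)%N else j.+1.
Lemma tw_lt (j : N) : (twn j < 2 * n.+1)%N.
Proof. rewrite /twn; have := ltn_ord j; case: ifP => /eqP H; lia. Qed.
Definition tw (j : N) : N := Ordinal (tw_lt j).
Lemma tw_val (j : N) : (tw j : nat) = twn j.
Proof. by []. Qed.

Lemma pr_tw j : pr (tw j) = pr j.
Proof. rewrite /pr tw_val /twn; case: ifP => /eqP H; lia. Qed.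

Lemma tw_neq j : (tw j != j).
Proof. apply/eqP => /(congr1 val); rewrite /= /twn; case: ifP => /eqP H; lia. Qed.

Lemma mem_Fs_pr i b a a' : pr a = pr a' -> (a \in Fs i b) = (a' \in Fs i b).
Proof. by rewrite !inE => ->. Qed.

Lemma indeg_tw (w : {ffun N -> bool}) S j :
  indeg_in S (Fx w) (tw j) = indeg_in S (Fx w) j.
Proof.
rewrite /indeg_in; apply: eq_card => i; rewrite !inE !ffunE.
by rewrite (mem_Fs_pr _ _ (pr_tw j)).
Qed.

Lemma winner_t t (w : {ffun N -> bool}) : avd_winner t (Fx w) = t.
Proof.
rewrite /avd_winner; case: pickP => [v /fintype.forallP Hv|] //.
apply/eqP; apply: contraT => Hvt.
have := Hv (tw v); rewrite tw_neq /= /avd_beats (negbTE Hvt).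
case: eqP => [Ht|_]; first by rewrite -Ht indeg_tw ltnn.
by rewrite indeg_tw ltnn.
Qed.

Definition Df (q : nat) (w : {ffun N -> bool}) : nat := #|[set i : N | bitp (lv i) q == w i]|.

Lemma indeg_le w j : (indeg (Fx w) j <= Df (pr j) w)%N.
Proof.
rewrite /indeg /indeg_in /Df; apply: subset_leq_card; apply/fintype.subsetP => i.
by rewrite !inE ffunE !inE => /andP [_ /andP [_ ->]].
Qed.

Lemma Df_le w j : (Df (pr j) w <= indeg (Fx w) j + 2)%N.
Proof.
rewrite /Df /indeg /indeg_in.
apply: (@leq_trans #|[set i in [set~ j] | j \in Fx w i] :|: [set j; tw j]|).
  apply: subset_leq_card; apply/fintype.subsetP => i; rewrite !inE ffunE !inE => Hb.
  case: (eqVneq (pr j) (pr i)) => Hp.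
    have [H|H] : (i : nat) = j \/ (i : nat) = twn j.
      by move: Hp; rewrite /pr /twn; case: ifP => /eqP; lia.
      by rewrite (val_inj H) eqxx orbT.
    have -> : i = tw j by apply: ord_inj; rewrite H.
    by rewrite eqxx !orbT.
  rewrite Hb /= andbT; apply/orP; left; apply/eqP => Hij; move: Hp; rewrite Hij eqxx //.
rewrite cardsU (leq_trans (leq_subr _ _)) // leq_add2l cards2; by case: (_ != _).
Qed.

Lemma indeg_maxdeg (x : profile N) j : (indeg x j <= maxdeg x)%N.
Proof. rewrite /maxdeg; exact: (@leq_bigmax _ (fun j => indeg x j) j). Qed.

Definition Al (l : 'I_L) : {set N} := [set i : N | lv i == l].
Definition Sl (l : 'I_L) (w : {ffun N -> bool}) : R := SS R (enum (Al l)) w.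

Lemma Sl_E l w : Sl l w = \sum_(i | lv i == l) ss R i w.
Proof. by rewrite /Sl /SS big_enum; apply: eq_bigl => i; rewrite inE. Qed.

Lemma ind_sg (b c : bool) : ((b == c) : nat)%:R = (1 + sg R b * sg R c) / 2 :> R.
Proof. by case: b; case: c => /=; rewrite /sg; field. Qed.

Lemma if10 (b : bool) : (if b then 1 else 0 : R) = (b : nat)%:R.
Proof. by case: b. Qed.

Lemma Df_eq q w : (Df q w)%:R =
  ((2 * n.+1)%:R + \sum_(l : 'I_L) sg R (bitp l q) * Sl l w) / 2 :> R.
Proof.
rewrite /Df -sum1_card natr_sum big_mkcond /=.
under eq_bigr => i _ do rewrite inE if10 ind_sg.
rewrite -mulr_suml big_split /= sumr_const card_ord; congr ((_ + _) / 2).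
rewrite (partition_big lv predT) //=; apply: eq_bigr => l _.
rewrite Sl_E big_distrr /=; apply: eq_bigr => i /eqP <-.
by rewrite /ss.
Qed.

Lemma L_pos (hn : (0 < n)%N) : (2 ^ L <= n.+1)%N.
Proof.
have H : (0 < trunc_log 2 n.+1)%N by rewrite trunc_log_gt0 /= ltnS.
by rewrite /L /L' prednK // trunc_logP.
Qed.

Lemma loss_bound (hn : (0 < n)%N) t w :
  (\sum_(l : 'I_L) `|Sl l w| - \sum_(l : 'I_L) sg R (bitp l (pr t)) * Sl l w) / 2 - 2
  <= ((maxdeg (Fx w) - indeg (Fx w) t)%N)%:R.
Proof.
have [q [Hq Hb]] := pattern_ex (fun l => 0 <= Sl (inord l) w) L.
have Hq2 : (2 * q < 2 * n.+1)%N by have := L_pos hn; lia.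
pose a : N := Ordinal Hq2.
have pa : pr a = q by rewrite /pr /=; lia.
have H1 := Df_le w a; rewrite pa in H1.
have H2 := indeg_le w t.
have H3 := indeg_maxdeg (Fx w) a.
have H4 := indeg_maxdeg (Fx w) t.
rewrite natrB //.
have E1 : \sum_(l : 'I_L) `|Sl l w| = \sum_(l : 'I_L) sg R (bitp l q) * Sl l w.
  apply: eq_bigr => l _; rewrite Hb ?ltn_ord // inord_val /sg.
  by case: lerP => H; [rewrite ger0_norm // mul1r | rewrite ltr0_norm // mulN1r].
have R1 : (Df q w)%:R <= (maxdeg (Fx w))%:R + 2 :> R.
  by rewrite -[2]/(2%:R) -natrD ler_nat (leq_trans H1) // leq_add2r.
have R2 : (indeg (Fx w) t)%:R <= (Df (pr t) w)%:R :> R by rewrite ler_nat.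
rewrite !Df_eq -E1 in R1 R2.
lra.
Qed.

Lemma sum_Sl l : \sum_(w : {ffun N -> bool}) Sl l w = 0.
Proof.
rewrite /Sl /SS exchange_big /=; apply: big1 => i _; exact: sum_ss.
Qed.

Lemma abs_Sl l : Num.sqrt (#|Al l|%:R) / 8 * 2 ^+ #|N| <= \sum_(w : {ffun N -> bool}) `|Sl l w| :> R.
Proof. by rewrite cardE; apply: mom1; exact: enum_uniq. Qed.

Lemma E_bound (hn : (0 < n)%N) t :
  \sum_(l : 'I_L) Num.sqrt (#|Al l|%:R) / 16 - 2 <= avd_expected_additive Pd t.
Proof.
rewrite /avd_expected_additive (expect_push (fun x => ((maxdeg x - indeg x (avd_winner t x))%N)%:R)).
rewrite (eq_bigr (fun w => ((maxdeg (Fx w) - indeg (Fx w) t)%N)%:R)); last by move=> w _; rewrite winner_t.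
set T : R := 2 ^+ #|N|.
have T0 : 0 < T by rewrite /T exprn_gt0.
rewrite ler_pdivlMr //.
apply: le_trans (ler_sum _ (fun w _ => loss_bound hn t w)).
rewrite sumrB -!mulr_suml sumrB sumr_const card_ffun card_bool -/T exchange_big /=.
have Z : \sum_(w : {ffun N -> bool}) \sum_(l : 'I_L) sg R (bitp l (pr t)) * Sl l w = 0.
  by rewrite exchange_big; apply: big1 => l _; rewrite -mulr_sumr sum_Sl mulr0.
rewrite Z subr0.
have -> : (2 *+ (2 ^ #|N|)%N : R) = 2 * T.
  by rewrite /T -mulr_natr natrX.
have H : \sum_(l : 'I_L) Num.sqrt (#|Al l|%:R) / 8 * T <= \sum_(l : 'I_L) \sum_w `|Sl l w|.
  by apply: ler_sum => l _; exact: abs_Sl.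
rewrite -!mulr_suml in H.
have E : forall X : R, (X / 16 - 2) * T = (X / 8 * T) / 2 - 2 * T by move=> X; field.
rewrite E.
lra.
Qed.

Lemma Pd_poll : opinion_poll Pd.
Proof.
move=> i; split; [|split].
- move=> S; rewrite ffunE divr_ge0 //; apply: sumr_ge0 => b _; exact: ler0n.
- under eq_bigr => S _ do rewrite ffunE.
  rewrite -mulr_suml exchange_big /=.
  have H b : \sum_(S : {set N}) ((Fs i b == S) : nat)%:R = 1 :> R.
    rewrite (bigD1 (Fs i b)) //= eqxx big1 ?addr0 //.
    by move=> S; rewrite eq_sym => /negbTE ->.
  under eq_bigr => b _ do rewrite H.
  by rewrite sumr_const card_bool divff.
- move=> S HS; rewrite ffunE big1 ?mul0r // => b _.
  case: eqP => // E; move: HS; rewrite -E inE eqxx //.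
Qed.

Lemma Al_card l : ((2 * n.+1) %/ L <= #|Al l|)%N.
Proof.
set m := ((2 * n.+1) %/ L)%N.
have Hm : (m * L <= 2 * n.+1)%N by exact: leq_trunc_div.
have Hlt (k : 'I_m) : (l + L * k < 2 * n.+1)%N.
  have h1 : (k.+1 <= m)%N := ltn_ord k.
  have h2 : (L * k.+1 <= L * m)%N by rewrite leq_mul2l h1 orbT.
  have h3 := ltn_ord l.
  rewrite mulnS in h2; rewrite mulnC in Hm; lia.
pose f (k : 'I_m) : N := Ordinal (Hlt k).
have finj : injective f.
  move=> k1 k2 /(congr1 val) /= /eqP; rewrite eqn_add2l eqn_mul2l /= => /eqP H.
  exact: ord_inj.
rewrite -[X in (X <= _)%N]card_ord -(card_imset _ finj); apply: subset_leq_card.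
apply/fintype.subsetP => _ /imsetP [k _ ->]; rewrite inE /lv /=.
by rewrite addnC mulnC modnMDl modn_small ?ltn_ord // inord_val.
Qed.

End Con.




Lemma nat_facts n : (0 < n)%N -> (n <= L n * ((2 * n.+1) %/ L n))%N /\ (n.+1 < 2 ^ (L n).+1)%N.
Proof.
move=> hn.
have HL := L_pos hn.
have H1 : (L n < 2 ^ L n)%N by rewrite ltn_expl.
have Hd := divn_eq (2 * n.+1) (L n).
have Hr : ((2 * n.+1) %% L n < L n)%N by rewrite ltn_pmod.
split; first by rewrite mulnC; lia.
have H : (0 < trunc_log 2 n.+1)%N by rewrite trunc_log_gt0 /= ltnS.
by rewrite /L /L' prednK //; apply: trunc_log_ltn.
Qed.

Section Fin.
Local Open Scope ring_scope.
Lemma final_arith (R : realType) n : (4096 <= n)%N ->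
  1 / 64 * Num.sqrt (n%:R * ln (n%:R : R)) <=
  \sum_(k : 'I_(L n)) Num.sqrt ((#|Al k|)%:R : R) / 16 - 2.
Proof.
move=> hn; have hn0 : (0 < n)%N by lia.

have [Hnm Hexp] := nat_facts hn0.
set m := ((2 * n.+1) %/ L n)%N in Hnm *.
set l := L n in Hnm Hexp *.
have l1 : (1 <= l)%N by [].
have HS : (l%:R * Num.sqrt (m%:R) <= \sum_(k : 'I_(L n)) Num.sqrt (#|Al k|%:R) :> R)%R.
  have -> : (l%:R * Num.sqrt (m%:R) = \sum_(k : 'I_(L n)) Num.sqrt (m%:R) :> R)%R.
    by rewrite sumr_const card_ord mulr_natl.
  apply: ler_sum => k _; rewrite ler_sqrt ?ler0n // ler_nat; exact: Al_card.
set Y : R := (l%:R * Num.sqrt (m%:R))%R in HS.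
set Z : R := Num.sqrt (n%:R * ln (n%:R : R)).
have Y0 : (0 <= Y)%R by rewrite /Y mulr_ge0 ?ler0n ?sqrtr_ge0.
have Z0 : (0 <= Z)%R by rewrite /Z sqrtr_ge0.
have nR : (4096 <= n%:R :> R)%R by rewrite -[4096%R]/((4096%:R)%R) ler_nat.
have lR : (1 <= l%:R :> R)%R by rewrite -[1%R]/((1%:R)%R) ler_nat.
have nlm : (n%:R <= l%:R * m%:R :> R)%R by rewrite -natrM ler_nat.
have m0 : (0 <= m%:R :> R)%R by rewrite ler0n.
have Y2 : (Y ^+ 2 = l%:R ^+ 2 * m%:R :> R)%R by rewrite /Y exprMn sqr_sqrtr.
have ln0 : (0 <= ln (n%:R : R))%R by apply: ln_ge0; rewrite ler1n.
have Z2 : (Z ^+ 2 = n%:R * ln (n%:R : R) :> R)%R by rewrite /Z sqr_sqrtr // mulr_ge0 ?ler0n.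
have lnb : (ln (n%:R : R) <= 2 * (l%:R + 1) :> R)%R.
  have n0 : (0 < n%:R :> R)%R by rewrite ltr0n.
  have p0 : (0 < 2 ^+ l.+1 :> R)%R by rewrite exprn_gt0.
  have : (ln (n%:R : R) <= ln (2 ^+ l.+1 : R))%R.
    rewrite ler_ln ?posrE // -natrX ler_nat; exact: leq_trans (leqnSn n) (ltnW Hexp).
  have E : (ln (2:R) *+ l.+1 = ln 2 * (l%:R + 1))%R by rewrite natr1 mulr_natr.
  rewrite lnXn // E.
  have H2 : (ln (2 : R) < 2)%R by apply: ln_sublinear.
  move=> H; apply: le_trans H _.
  have h0 : (0 <= l%:R + 1 :> R)%R by lra.
  have h1 : (0 < l%:R + 1 :> R)%R by lra.
  by rewrite ler_pM2r // ltW.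
have Zle : (Z ^+ 2 <= 4 * Y ^+ 2 :> R)%R.
  rewrite Z2 Y2.
  have h1 : (n%:R * ln (n%:R : R) <= n%:R * (2 * (l%:R + 1)) :> R)%R.
    by rewrite ler_wpM2l ?ler0n.
  have h2 : (n%:R * (2 * (l%:R + 1)) <= 4 * (l%:R * n%:R) :> R)%R.
    have e1 : (n%:R * (2 * (l%:R + 1)) = 2 * (l%:R * n%:R) + 2 * n%:R :> R)%R by ring.
    have e2 : (n%:R <= l%:R * n%:R :> R)%R by rewrite ler_peMl ?ler0n.
    rewrite e1; lra.
  have h3 : (4 * (l%:R * n%:R) <= 4 * (l%:R ^+ 2 * m%:R) :> R)%R.
    have -> : (l%:R ^+ 2 * m%:R = l%:R * (l%:R * m%:R) :> R)%R by rewrite expr2 mulrA.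
    rewrite ler_pM2l //; apply: ler_wpM2l => //; lra.
  lra.
have ZY : (Z <= 2 * Y)%R.
  have e : ((2 * Y) ^+ 2 = 4 * Y ^+ 2 :> R)%R by ring.
  rewrite -(@ler_pXn2r _ 2) ?nnegrE // ?e //; lra.
have Y64 : (64 <= Y)%R.
  have : (4096 <= Y ^+ 2)%R.
    rewrite Y2.
    have : (n%:R <= l%:R ^+ 2 * m%:R :> R)%R.
      apply: le_trans nlm _; rewrite expr2 -mulrA ler_peMl ?mulr_ge0 ?ler0n //.
    lra.
  have e : (64 ^+ 2 = 4096 :> R)%R by rewrite expr2 -!natrM.
  move=> H; rewrite -(@ler_pXn2r _ 2) ?nnegrE // ?e //; lra.
have -> : (\sum_(k : 'I_(L n)) Num.sqrt (#|Al k|%:R) / 16 = (\sum_(k : 'I_(L n)) Num.sqrt (#|Al k|%:R)) / 16 :> R)%R.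
  by rewrite mulr_suml.
rewrite -/Z.
lra.
Qed.
End Fin.


Unset Implicit Arguments.
Set Strict Implicit.

Theorem mainTheorem18 (R : realType) :
  exists c : R, (0 < c)%R /\
  exists n0 : nat, forall n : nat, (n0 <= n)%N ->
    exists P : 'I_(2 * n.+1) -> {ffun {set 'I_(2 * n.+1)} -> R},
      opinion_poll P /\
      forall t : 'I_(2 * n.+1),
        (c * Num.sqrt (n%:R * ln (n%:R : R)) <= avd_expected_additive P t)%R.
Proof.
exists (1 / 64)%R; split; first by rewrite divr_gt0.
exists 4096%N => n hn.
exists (@Pd R n); split; first exact: Pd_poll.
move=> t.
have hn0 : (0 < n)%N by lia.
apply: le_trans (E_bound R hn0 t).
exact: final_arith.
Qed.
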